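(* Let $K=(S,L,\to)$ be a Kripke structure and $\mathcal{C}$ a colouring of $S$ such that any two states with the same colour satisfy the same atomic propositions and have the same $\mathcal{C}$-coloured traces of length two. Then $\mathcal{C}$ is consistent.
   Context: Fix a set $\mathbf{AP}$ of atomic propositions. A Kripke structure is $K=(S,L,\to)$ with $L:S\to\mathcal{P}(\mathbf{AP})$ and $\to\subseteq S\times S$ (not necessarily total); a state $s$ satisfies $p\in\mathbf{AP}$ iff $p\in L(s)$. A finite path from $s$ is a sequence $s_0,\dots,s_n$ with $s_0=s$ and $s_k\to s_{k+1}$; an infinite path is defined analogously. A colouring is a function $\mathcal{C}$ from $S$ into an arbitrary set of colours. For a path $\pi=s_0,s_1,\dots$, $\mathcal{C}(\pi)$ is obtained from $\mathcal{C}(s_0),\mathcal{C}(s_1),\dots$ by contracting each maximal (finite or infinite) block of consecutive equal colours to a single colour; for $\pi$ a path from $s$, $\mathcal{C}(\pi)$ is a $\mathcal{C}$-coloured trace of $s$, and its length is its number of entries. $\mathcal{C}$ is consistent if any two states of the same colour satisfy the same atomic propositions and have the same (finite and infinite) $\mathcal{C}$-coloured traces. *)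

(* Defs.v *)
Inductive len : Type := Fin (n : nat) | Inf.

Definition lt_len (i : nat) (l : len) : Prop :=
  match l with Fin n => i < n | Inf => True end.

(* A (finite or infinite) sequence: its length and its entries
   (entries at indices outside the length are irrelevant). *)
Record sequ (A : Type) : Type := Sequ { slen : len; sat : nat -> A }.
Arguments Sequ {A}.
Arguments slen {A}.
Arguments sat {A}.

Definition seq_eq {A : Type} (u v : sequ A) : Prop :=
  slen u = slen v /\ forall i, lt_len i (slen u) -> sat u i = sat v i.

Definition is_path {St : Type} (R : St -> St -> Prop) (s : St) (pi : sequ St) : Prop :=
  slen pi <> Fin 0 /\ sat pi 0 = s /\
  forall k, lt_len (S k) (slen pi) -> R (sat pi k) (sat pi (S k)).

(* t = C(pi): the colour sequence of pi with every maximal (finite or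
   infinite) block of consecutive equal colours contracted to a single
   colour.  f i is the index of the block containing position i. *)
Definition contraction {St Col : Type} (C : St -> Col) (pi : sequ St) (t : sequ Col)
  : Prop :=
  exists f : nat -> nat,
    f 0 = 0 /\
    (forall i, lt_len (S i) (slen pi) ->
        (C (sat pi (S i)) = C (sat pi i) -> f (S i) = f i) /\
        (C (sat pi (S i)) <> C (sat pi i) -> f (S i) = S (f i))) /\
    (forall i, lt_len i (slen pi) -> sat t (f i) = C (sat pi i)) /\
    (forall j, lt_len j (slen t) <-> exists i, lt_len i (slen pi) /\ f i = j).

Definition coloured_trace {St Col : Type} (R : St -> St -> Prop) (C : St -> Col)
  (s : St) (t : sequ Col) : Prop :=
  exists pi, is_path R s pi /\ contraction C pi t.

Definition traces_incl {St Col : Type} (R : St -> St -> Prop) (C : St -> Col)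
  (P : sequ Col -> Prop) (s s' : St) : Prop :=
  forall t, coloured_trace R C s t -> P t ->
    exists t', coloured_trace R C s' t' /\ seq_eq t t'.

Definition same_props {AP St : Type} (L : St -> AP -> Prop) (s s' : St) : Prop :=
  forall p : AP, L s p <-> L s' p.

Definition consistent {AP St Col : Type} (L : St -> AP -> Prop)
  (R : St -> St -> Prop) (C : St -> Col) : Prop :=
  forall s s', C s = C s' ->
    same_props L s s' /\
    traces_incl R C (fun _ => True) s s' /\
    traces_incl R C (fun _ => True) s' s.

(* Main.v *)
Require Import Defs.
From Stdlib Require Import Arith Lia Classical ClassicalEpsilon ClassicalDescription.

Lemma lt_len_down i i' l : i <= i' -> lt_len i' l -> lt_len i l.
Proof. destruct l; simpl; intros; auto; lia. Qed.

Fixpoint pos (ml : nat -> nat) (i : nat) : nat * nat :=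
  match i with
  | 0 => (0, 0)
  | S i => let (j, k) := pos ml i in if S k <? ml j then (j, S k) else (S j, 0)
  end.

Lemma pos_S ml i : pos ml (S i) =
  let (j, k) := pos ml i in if S k <? ml j then (j, S k) else (S j, 0).
Proof. reflexivity. Qed.

Fixpoint II (ml : nat -> nat) (j : nat) : nat :=
  match j with 0 => 0 | S j => II ml j + ml j end.

Lemma II_mono ml j j' : j <= j' -> II ml j <= II ml j'.
Proof. induction 1; simpl; lia. Qed.

Lemma pos_inv ml (Hml : forall j, 1 <= ml j) i :
  snd (pos ml i) < ml (fst (pos ml i)) /\ i = II ml (fst (pos ml i)) + snd (pos ml i).
Proof.
  induction i as [|i IH]; simpl.
  - specialize (Hml 0); lia.
  - destruct (pos ml i) as [j k]; simpl in *.
    destruct (Nat.ltb_spec (S k) (ml j)); simpl; specialize (Hml (S j)); lia.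
Qed.

Lemma pos_II ml (Hml : forall j, 1 <= ml j) j k : k < ml j -> pos ml (II ml j + k) = (j, k).
Proof.
  revert k; induction j as [|j IH]; intros k Hk.
  - simpl. induction k as [|k IHk]; [reflexivity|].
    simpl in *. rewrite IHk by lia. destruct (Nat.ltb_spec (S k) (ml 0)); [reflexivity|lia].
  - assert (H0 : pos ml (II ml (S j)) = (S j, 0)).
    { simpl. specialize (Hml j). destruct (ml j) as [|m] eqn:E; [lia|].
      replace (II ml j + S m) with (S (II ml j + m)) by lia. simpl.
      rewrite IH by lia. rewrite E. destruct (Nat.ltb_spec (S m) (S m)); [lia|reflexivity]. }
    induction k as [|k IHk]; [rewrite Nat.add_0_r; exact H0|].
    replace (II ml (S j) + S k) with (S (II ml (S j) + k)) by lia. rewrite pos_S.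
    rewrite IHk by lia. destruct (Nat.ltb_spec (S k) (ml (S j))); [reflexivity|lia].
Qed.


Lemma f_mono (f : nat -> nat) l
  (Hf : forall i, lt_len (S i) l -> f (S i) = f i \/ f (S i) = S (f i)) :
  forall i k, lt_len i l -> k <= i -> f k <= f i.
Proof.
  induction i as [|i IH]; intros k Hl Hk.
  - replace k with 0 by lia; lia.
  - destruct (Nat.eq_dec k (S i)); [subst; lia|].
    specialize (IH k (lt_len_down i (S i) l ltac:(lia) Hl) ltac:(lia)).
    destruct (Hf i Hl); lia.
Qed.

Lemma block_change (f : nat -> nat) l (Hf0 : f 0 = 0)
  (Hf : forall i, lt_len (S i) l -> f (S i) = f i \/ f (S i) = S (f i)) :
  forall i j, lt_len i l -> f i = S j -> exists i', i' < i /\ f i' = j /\ f (S i') = S j.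
Proof.
  induction i as [|i IH]; intros j Hl Hi.
  - congruence.
  - destruct (Hf i Hl) as [E|E].
    + destruct (IH j (lt_len_down i (S i) l ltac:(lia) Hl) ltac:(congruence)) as [i' ?].
      exists i'; intuition lia.
    + exists i; repeat split; try lia; congruence.
Qed.

Lemma f_step {St Col} (C : St -> Col) (pi : sequ St) f
  (Hfs : forall i, lt_len (S i) (slen pi) ->
        (C (sat pi (S i)) = C (sat pi i) -> f (S i) = f i) /\
        (C (sat pi (S i)) <> C (sat pi i) -> f (S i) = S (f i))) :
  forall i, lt_len (S i) (slen pi) -> f (S i) = f i \/ f (S i) = S (f i).
Proof.
  intros i Hi; destruct (Hfs i Hi) as [A B].
  destruct (classic (C (sat pi (S i)) = C (sat pi i))); auto.
Qed.

Definition hopP {St Col} (R : St -> St -> Prop) (C : St -> Col) v c m (h : nat -> St) :=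
  1 <= m /\ h 0 = v /\ (forall k, k < m -> C (h k) = C v /\ R (h k) (h (S k))) /\ C (h m) = c.

Definition hop {St Col} (R : St -> St -> Prop) (C : St -> Col) (v : St) (c : Col)
  : nat * (nat -> St) :=
  match excluded_middle_informative
          (exists p : nat * (nat -> St), hopP R C v c (fst p) (snd p)) with
  | left H => proj1_sig (constructive_indefinite_description _ H)
  | right _ => (1, fun _ => v)
  end.

Lemma hop_spec {St Col} R (C : St -> Col) v c :
  (exists p : nat * (nat -> St), hopP R C v c (fst p) (snd p)) ->
  hopP R C v c (fst (hop R C v c)) (snd (hop R C v c)).
Proof.
  intro H; unfold hop; destruct (excluded_middle_informative _) as [e|]; [|contradiction].
  destruct (constructive_indefinite_description _ e) as [p Hp]; exact Hp.
Qed.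

Lemma hop_ml {St Col} R (C : St -> Col) v c : 1 <= fst (hop R C v c).
Proof.
  unfold hop; destruct (excluded_middle_informative _) as [H|]; simpl; [|lia].
  destruct (constructive_indefinite_description _ H) as [p Hp]; exact (proj1 Hp).
Qed.

Lemma hop_0 {St Col} R (C : St -> Col) v c : snd (hop R C v c) 0 = v.
Proof.
  unfold hop; destruct (excluded_middle_informative _) as [H|]; simpl; [|reflexivity].
  destruct (constructive_indefinite_description _ H) as [p Hp]; exact (proj1 (proj2 Hp)).
Qed.

Fixpoint bs {St Col} (hp : St -> Col -> nat * (nat -> St)) (tc : nat -> Col) (s0 : St) j :=
  match j with
  | 0 => s0
  | S j => let p := hp (bs hp tc s0 j) (tc (S j)) in snd p (fst p)
  end.

Lemma main {St Col} (R : St -> St -> Prop) (C : St -> Col)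
  (H : forall u v, C u = C v -> traces_incl R C (fun t => slen t = Fin 2) u v)
  s s' (Hss : C s = C s') : traces_incl R C (fun _ => True) s s'.
Proof.
  intros t [pi [Hpath Hcon]] _.
  exists t. split; [|split; auto].
  destruct Hcon as [f [Hf0 [Hfs [Hent Hrng]]]].
  destruct Hpath as [Hpl [Hp0 HpR]].
  pose proof (f_step C pi f Hfs) as Hst.
  set (tc := sat t).
  assert (Hlt0 : lt_len 0 (slen t)).
  { apply Hrng. exists 0; split; auto. destruct (slen pi); simpl; auto.
    destruct n; [congruence|lia]. }
  assert (Hchange : forall j, lt_len (S j) (slen t) -> exists u w,
             R u w /\ C u = tc j /\ C w = tc (S j) /\ tc j <> tc (S j)).
  { intros j Hj. apply Hrng in Hj. destruct Hj as [i [Hi Hfi]].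
    destruct (block_change f _ Hf0 Hst i j Hi Hfi) as [i' [Hlt [E1 E2]]].
    assert (HS : lt_len (S i') (slen pi)) by (apply (lt_len_down _ i); auto; lia).
    assert (Hi' : lt_len i' (slen pi)) by (apply (lt_len_down _ i); auto; lia).
    exists (sat pi i'), (sat pi (S i')).
    pose proof (Hent i' Hi') as A. pose proof (Hent (S i') HS) as B.
    rewrite E1 in A. rewrite E2 in B. unfold tc.
    repeat split; auto.
    intro E. destruct (Hfs i' HS) as [Hx _]. assert (f (S i') = f i') by (apply Hx; congruence).
    lia. }
  assert (Hhop : forall v j, lt_len (S j) (slen t) -> C v = tc j ->
             exists p : nat * (nat -> St), hopP R C v (tc (S j)) (fst p) (snd p)).
  { intros v j Hj Hv.
    destruct (Hchange j Hj) as [u [w [Ruw [Cu [Cw Hne]]]]].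
    destruct (H u v ltac:(congruence)
       (Sequ (Fin 2) (fun n => match n with 0 => tc j | _ => tc (S j) end))) as
      [t2 [[pi2 [[Hpl2 [Hp02 HpR2]] [f2 [Hf02 [Hfs2 [Hent2 Hrng2]]]]]] [Hl2 He2]]].
    { exists (Sequ (Fin 2) (fun n => match n with 0 => u | _ => w end)).
      split.
      - split; [simpl; congruence|split; [reflexivity|]].
        intros k Hk; simpl in Hk. destruct k; [exact Ruw|lia].
      - exists (fun n => n). simpl. split; [reflexivity|split; [|split]].
        + intros i Hi. destruct i; [|lia]. split; intros; congruence.
        + intros i Hi. destruct i; [congruence|]. destruct i; [congruence|lia].
        + intros j0; split; [intro; exists j0; auto|intros [i [? ?]]; lia]. }
    { reflexivity. }
    simpl in Hl2, He2.
    assert (H1 : lt_len 1 (slen t2)) by (rewrite <- Hl2; simpl; lia).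
    apply Hrng2 in H1. destruct H1 as [i [Hi Hfi]].
    pose proof (f_step C pi2 f2 Hfs2) as Hst2.
    destruct (block_change f2 _ Hf02 Hst2 i 0 Hi Hfi) as [i' [Hlt [E1 E2]]].
    exists (S i', sat pi2). simpl. split; [lia|split; [exact Hp02|split]].
    - intros k Hk.
      assert (Hkl : lt_len (S k) (slen pi2)) by (apply (lt_len_down _ i); auto; lia).
      assert (Hkl' : lt_len k (slen pi2)) by (apply (lt_len_down _ i); auto; lia).
      split; [|apply HpR2; exact Hkl].
      assert (Hi'l : lt_len i' (slen pi2)) by (apply (lt_len_down _ i); auto; lia).
      pose proof (f_mono f2 _ Hst2 i' k Hi'l ltac:(lia)) as Hm.
      rewrite <- (Hent2 k Hkl'). rewrite <- Hp02.
      assert (Z : lt_len 0 (slen pi2)) by (apply (lt_len_down _ i); auto; lia).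
      rewrite <- (Hent2 0 Z). f_equal. lia.
    - assert (Hkl : lt_len (S i') (slen pi2)) by (apply (lt_len_down _ i); auto; lia).
      rewrite <- (Hent2 _ Hkl). rewrite E2. rewrite <- (He2 1); simpl; auto. }
  set (hp := hop R C).
  set (b := bs hp tc s').
  set (ml := fun j => fst (hp (b j) (tc (S j)))).
  set (hh := fun j => snd (hp (b j) (tc (S j)))).
  assert (Hml : forall j, 1 <= ml j) by (intro; apply hop_ml).
  assert (Hh0 : forall j, hh j 0 = b j) by (intro; apply hop_0).
  assert (HbS : forall j, b (S j) = hh j (ml j)) by reflexivity.
  assert (Hbcol : forall j, lt_len j (slen t) -> C (b j) = tc j).
  { induction j as [|j IH]; intro Hj.
    - change (b 0) with s'. rewrite <- Hss, <- Hp0. unfold tc. rewrite <- (Hent 0); [rewrite Hf0; reflexivity|].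
      apply Hrng in Hlt0. destruct Hlt0 as [i [Hi Hfi]]. apply (lt_len_down _ i); auto; lia.
    - rewrite HbS. pose proof (IH (lt_len_down j (S j) _ ltac:(lia) Hj)) as Hc.
      apply (hop_spec R C), (Hhop _ _ Hj Hc). }
  assert (HP : forall j, lt_len (S j) (slen t) -> hopP R C (b j) (tc (S j)) (ml j) (hh j)).
  { intros j Hj. apply hop_spec, Hhop; auto. apply Hbcol. apply (lt_len_down _ (S j)); auto. }
  set (slen' := match slen t with Fin N => Fin (S (II ml (pred N))) | Inf => Inf end).
  assert (Hr1 : forall i, lt_len i slen' -> lt_len (fst (pos ml i)) (slen t) /\ (snd (pos ml i) <> 0 -> lt_len (S (fst (pos ml i))) (slen t))).
  { intros i Hi. pose proof (pos_inv ml Hml i) as [Hk Hi'].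
    unfold slen' in Hi. destruct (slen t) as [N|]; simpl in *; auto.
    destruct (pos ml i) as [j k]; simpl in *.
    split.
    - destruct (le_lt_dec N j); auto.
      pose proof (II_mono ml N j l). destruct N; [lia|]. simpl in *.
      pose proof (Hml N). lia.
    - intro Hk0. destruct (le_lt_dec N (S j)); auto.
      pose proof (II_mono ml (pred N) j ltac:(lia)). lia. }
  assert (Hr2 : forall i, lt_len (S i) slen' -> lt_len (S (fst (pos ml i))) (slen t)).
  { intros i Hi. pose proof (pos_inv ml Hml i) as [Hk Hi'].
    unfold slen' in Hi. destruct (slen t) as [N|]; simpl in *; auto.
    destruct (pos ml i) as [j k]; simpl in *.
    destruct (le_lt_dec N (S j)); auto.
    pose proof (II_mono ml (pred N) j ltac:(lia)). lia. }
  assert (Hr3 : forall j, lt_len j (slen t) -> lt_len (II ml j) slen').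
  { intros j Hj. unfold slen'. destruct (slen t) as [N|]; simpl in *; auto.
    pose proof (II_mono ml j (pred N) ltac:(lia)). lia. }
  assert (HpiS : forall i, hh (fst (pos ml (S i))) (snd (pos ml (S i))) =
                           hh (fst (pos ml i)) (S (snd (pos ml i)))).
  { intro i. pose proof (pos_inv ml Hml i) as [Hk _]. rewrite pos_S.
    destruct (pos ml i) as [j k]; simpl in *.
    destruct (Nat.ltb_spec (S k) (ml j)); simpl; auto.
    rewrite Hh0, HbS. f_equal. lia. }
  assert (Hcol : forall i, lt_len i slen' -> C (hh (fst (pos ml i)) (snd (pos ml i))) =
                                          tc (fst (pos ml i))).
  { intros i Hi. destruct (Hr1 i Hi) as [A B]. pose proof (pos_inv ml Hml i) as [Hk _].
    destruct (Nat.eq_dec (snd (pos ml i)) 0) as [E|E].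
    - rewrite E, Hh0. auto.
    - destruct (HP _ (B E)) as [_ [_ [Hx _]]]. rewrite (proj1 (Hx _ Hk)). auto. }
  exists (Sequ slen' (fun i => hh (fst (pos ml i)) (snd (pos ml i)))). split.
  - split; [|split].
    + unfold slen'; destruct (slen t); discriminate.
    + cbn [sat pos fst snd]. rewrite Hh0. reflexivity.
    + intros k Hk. cbn [sat slen]. rewrite HpiS. destruct (HP _ (Hr2 k Hk)) as [_ [_ [Hx _]]].
      apply Hx. apply pos_inv; auto.
  - exists (fun i => fst (pos ml i)). split; [reflexivity|split; [|split]].
    + intros i Hi. cbn [sat slen] in *. rewrite HpiS.
      pose proof (pos_inv ml Hml i) as [Hk _].
      pose proof (HP _ (Hr2 i Hi)) as Hq.
      pose proof (Hchange _ (Hr2 i Hi)) as [u [w [_ [_ [_ Hne]]]]].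
      pose proof (Hr2 i Hi) as Hr2i. rewrite pos_S.
      destruct (pos ml i) as [j k]; simpl in *.
      destruct Hq as [_ [_ [Hx Hy]]].
      destruct (Nat.ltb_spec (S k) (ml j)); simpl.
      * split; auto. intro E; exfalso; apply E.
        rewrite (proj1 (Hx _ H0)), (proj1 (Hx _ Hk)). reflexivity.
      * split; auto. intro E; exfalso.
        replace (S k) with (ml j) in E by lia. rewrite Hy, (proj1 (Hx _ Hk)) in E.
        rewrite Hbcol in E. { apply Hne; auto. }
        apply (lt_len_down _ (S j)); auto.
    + intros i Hi. symmetry. apply Hcol. auto.
    + intro j; split.
      * intro Hj. exists (II ml j). split; auto.
        rewrite <- (Nat.add_0_r (II ml j)), pos_II; auto.
      * intros [i [Hi E]]. subst j. apply Hr1; auto.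
Qed.

Theorem lemma2p5 (AP St Col : Type) (L : St -> AP -> Prop) (R : St -> St -> Prop)
  (C : St -> Col) :
  (forall s s', C s = C s' ->
     same_props L s s' /\
     traces_incl R C (fun t => slen t = Fin 2) s s' /\
     traces_incl R C (fun t => slen t = Fin 2) s' s) ->
  consistent L R C.
Proof.
  intros H s s' E.
  assert (H' : forall u v, C u = C v -> traces_incl R C (fun t => slen t = Fin 2) u v)
    by (intros u v Huv; apply (H u v Huv)).
  split; [apply (H s s' E)|split; apply (main R C H'); auto].
Qed.
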